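(* For integers $M,N,m,l,r$ with $1\leq m\leq l<N$, $M-m\geq N-l\geq 1$ and $0\leq r\leq M-N+2l-2m+2$, the polynomial \[ {M\brack m}{N\brack l}-q^{r}{M\brack m-1}{N\brack l+1} \] has nonnegative coefficients as a polynomial in $q$.
   Context: ${n\brack m}=\prod_{i=0}^{m-1}\frac{1-q^{n-i}}{1-q^{m-i}}$ denotes the Gaussian polynomial ($q$-binomial coefficient) for integers $n\ge m\ge0$. *)

(* Defs.v *)
From mathcomp Require Import all_boot all_order all_algebra.
Set Implicit Arguments. Unset Strict Implicit. Unset Printing Implicit Defensive.
Import GRing.Theory Num.Theory.
Local Open Scope ring_scope.

(* Gaussian polynomial [n brack m] = prod_{i<m} (1 - q^(n-i)) / (1 - q^(m-i)),
   as a polynomial in q = 'X with rational coefficients (the quotient is exact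
   for n >= m >= 0; field polynomial division is used). *)
Definition gauss (n m : nat) : {poly rat} :=
  (\prod_(i < m) (1 - 'X^(n - i))) %/ (\prod_(i < m) (1 - 'X^(m - i))).

(* Main.v *)
Require Import Defs.
From mathcomp Require Import all_boot all_order all_algebra.
From mathcomp Require Import ring zify.
Import GRing.Theory Num.Theory.
Local Open Scope ring_scope.

Fixpoint G (k : nat) : nat -> {poly rat} :=
  match k with
  | 0 => fun _ => 1
  | k0.+1 => fix Gk (w : nat) : {poly rat} :=
      match w with 0 => 1 | w0.+1 => G k0 w0.+1 + 'X^(k0.+1) * Gk w0 end
  end.

Lemma G0w w : G 0 w = 1. Proof. by []. Qed.
Lemma Gk0 k : G k 0 = 1. Proof. by case: k. Qed.
Lemma GS k w : G k.+1 w.+1 = G k w.+1 + 'X^(k.+1) * G k.+1 w. Proof. by []. Qed.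

Fixpoint P (a n : nat) : {poly rat} :=
  if n is n'.+1 then P a n' * (1 - 'X^(a + n)) else 1.

Lemma PS a n : P a n.+1 = P a n * (1 - 'X^(a + n.+1)). Proof. by []. Qed.

Lemma Pshift a n : P a n.+1 = (1 - 'X^(a.+1)) * P a.+1 n.
Proof.
elim: n => [|n IH]; first by rewrite PS /= addn1 mul1r mulr1.
by rewrite PS IH PS -mulrA addSnnS.
Qed.

Lemma GPprod k w : G k w * P 0 k = P w k.
Proof.
elim: k w => [|k IHk] w; first by rewrite G0w mulr1.
elim: w => [|w IHw]; first by rewrite Gk0 mul1r.
have h2 : G k.+1 w * (P 0 k * (1 - 'X^(k.+1))) = (1 - 'X^(w.+1)) * P w.+1 k.
  by rewrite -Pshift -IHw /= add0n.
rewrite GS [P 0 k.+1]/= add0n mulrDl -mulrA h2 mulrA IHk [P w.+1 k.+1]/= exprD.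
ring.
Qed.

Lemma prodP w m : \prod_(i < m) (1 - 'X^(m + w - i)) = P w m :> {poly rat}.
Proof.
elim: m => [|m IH]; first by rewrite big_ord0.
rewrite big_ord_recl /=.
under eq_bigr => i _ do rewrite addSn subSS.
by rewrite IH subn0 addnC mulrC.
Qed.

Lemma P0nz k : P 0 k != 0.
Proof.
elim: k => [|k IH] /=; first by rewrite oner_neq0.
rewrite mulf_neq0 // add0n subr_eq0 eq_sym; apply/negP => /eqP h.
by have := congr1 (fun p : {poly rat} => size p) h; rewrite size_polyXn size_poly1.
Qed.

Lemma gaussE m w : gauss (m + w) m = G m w.
Proof.
rewrite /gauss prodP.
have := prodP 0 m; rewrite addn0 => ->.
by rewrite -GPprod mulpK // P0nz.
Qed.

Lemma GP1 k w : G k.+1 w.+1 = G k.+1 w + 'X^(w.+1) * G k w.+1.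
Proof.
apply: (mulIf (P0nz k.+1)).
rewrite GPprod mulrDl GPprod -mulrA.
have -> : G k w.+1 * P 0 k.+1 = P w.+1 k * (1 - 'X^(k.+1)).
  by rewrite [P 0 k.+1]/= add0n mulrA GPprod.
rewrite [P w k.+1]Pshift PS exprD.
ring.
Qed.

Definition nn (p : {poly rat}) := forall i, 0 <= p`_i.

Lemma nnD p q : nn p -> nn q -> nn (p + q).
Proof. by move=> hp hq i; rewrite coefD addr_ge0. Qed.

Lemma nnM p q : nn p -> nn q -> nn (p * q).
Proof.
move=> hp hq i; rewrite coefM; apply: sumr_ge0 => j _; exact: mulr_ge0.
Qed.

Lemma nnXn n : nn 'X^n.
Proof. by move=> i; rewrite coefXn ler0n. Qed.

Lemma nn1 : nn 1.
Proof. by move=> i; rewrite coef1 ler0n. Qed.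

Lemma nnG k w : nn (G k w).
Proof.
elim: k w => [|k IHk] w; first exact: nn1.
elim: w => [|w IHw]; first exact: nn1.
rewrite GS; apply: nnD => //; apply: nnM => //; exact: nnXn.
Qed.

Definition E m a l b r :=
  G m.+1 a * G l b.+1 - 'X^r * G m a.+1 * G l.+1 b.

Lemma main n : forall m a l b r, (m + a + l + b = n)%N -> (m <= l)%N ->
  (b <= a)%N -> (r <= (l - m) + (a - b))%N -> nn (E m a l b r).
Proof.
elim/ltn_ind: n => n IH m a l b r Hn Hml Hba Hr.
have IH' : forall m a l b r, (m + a + l + b < n)%N -> (m <= l)%N ->
  (b <= a)%N -> (r <= (l - m) + (a - b))%N -> nn (E m a l b r).
  by move=> m' a' l' b' r' Hlt; exact: (IH _ Hlt m' a' l' b' r' erefl).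
case: (ltnP b a) => Hba'.
- case: a Hn Hba Hr Hba' => [|a0] Hn Hba Hr Hba'; first by [].
  case: r Hr => [|s] Hr.
  + case: m Hn Hml Hr => [|k] Hn Hml Hr.
    * have -> : E 0 a0.+1 l b 0 = E 0 a0 l b 0 + 'X^(a0.+1) * (G 0 a0.+1 * G l b.+1).
        by rewrite /E [G 1 a0.+1]GP1 !G0w !exprS !expr0; ring.
      apply: nnD; first (apply: IH'; lia).
      apply: nnM; first exact: nnXn.
      apply: nnM; exact: nnG.
    * have -> : E k.+1 a0.+1 l b 0 = E k.+1 a0 l b 0 + 'X^(a0.+1) * E k a0.+1 l b 1.
        by rewrite /E [G k.+2 a0.+1]GP1 [G k.+1 a0.+2]GP1 !exprS !expr0; ring.
      apply: nnD; first (apply: IH'; lia).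
      apply: nnM; first exact: nnXn.
      apply: IH'; lia.
  + case: m Hn Hml Hr => [|k] Hn Hml Hr.
    * have -> : E 0 a0.+1 l b s.+1 = G 0 a0.+1 * G l b.+1 + 'X^1 * E 0 a0 l b s.
        by rewrite /E [G 1 a0.+1]GS !G0w !exprS !expr0; ring.
      apply: nnD; first (apply: nnM; exact: nnG).
      apply: nnM; first exact: nnXn.
      apply: IH'; lia.
    * have -> : E k.+1 a0.+1 l b s.+1 = E k a0.+1 l b s.+1 + 'X^(k.+2) * E k.+1 a0 l b s.
        by rewrite /E [G k.+2 a0.+1]GS [G k.+1 a0.+2]GS !exprS; ring.
      apply: nnD; first (apply: IH'; lia).
      apply: nnM; first exact: nnXn.
      apply: IH'; lia.
- case: (ltnP m l) => Hml'.
  + case: l Hn Hml Hr Hml' => [|l0] Hn Hml Hr Hml'; first by [].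
    case: r Hr => [|s] Hr.
    * case: b Hn Hba Hr Hba' => [|j] Hn Hba Hr Hba'.
      -- have -> : E m a l0.+1 0 0 = E m a l0 0 0 + 'X^(l0.+1) * (G m.+1 a * G l0.+1 0).
           by rewrite /E [G l0.+1 1]GS !Gk0 !exprS !expr0; ring.
         apply: nnD; first (apply: IH'; lia).
         apply: nnM; first exact: nnXn.
         apply: nnM; exact: nnG.
      -- have -> : E m a l0.+1 j.+1 0 = E m a l0 j.+1 0 + 'X^(l0.+1) * E m a l0.+1 j 1.
           by rewrite /E [G l0.+1 j.+2]GS [G l0.+2 j.+1]GS !exprS !expr0; ring.
         apply: nnD; first (apply: IH'; lia).
         apply: nnM; first exact: nnXn.
         apply: IH'; lia.
    * case: b Hn Hba Hr Hba' => [|j] Hn Hba Hr Hba'.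
      -- have -> : E m a l0.+1 0 s.+1 = G m.+1 a * G l0.+1 0 + 'X^1 * E m a l0 0 s.
           by rewrite /E [G l0.+1 1]GP1 !Gk0 !exprS !expr0; ring.
         apply: nnD; first (apply: nnM; exact: nnG).
         apply: nnM; first exact: nnXn.
         apply: IH'; lia.
      -- have -> : E m a l0.+1 j.+1 s.+1 = E m a l0.+1 j s.+1 + 'X^(j.+2) * E m a l0 j.+1 s.
           by rewrite /E [G l0.+1 j.+2]GP1 [G l0.+2 j.+1]GP1 !exprS; ring.
         apply: nnD; first (apply: IH'; lia).
         apply: nnM; first exact: nnXn.
         apply: IH'; lia.
  + have eml : m = l by lia.
    have eab : b = a by lia.
    have er : r = 0%N by lia.
    subst m b r.
    rewrite /E expr0.
    have -> : G l.+1 a * G l a.+1 - 1 * G l a.+1 * G l.+1 a = 0 by ring.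
    by move=> i; rewrite coef0.
Qed.

Theorem lemma3p2 (M N m l r : nat) :
  (1 <= m)%N -> (m <= l)%N -> (l < N)%N ->
  (N - l <= M - m)%N ->
  (r + N + 2 * m <= M + 2 * l + 2)%N ->
  forall i : nat,
    0 <= (gauss M m * gauss N l - 'X^r * gauss M m.-1 * gauss N l.+1)`_i.
Proof.
move=> H1 H2 H3 H4 H5 i.
case: m H1 H2 H4 H5 => [|m'] // H1 H2 H4 H5.
set a := (M - m'.+1)%N.
set b' := (N - l).-1.
have eM1 : gauss M m'.+1 = G m'.+1 a by rewrite -gaussE; congr gauss; lia.
have eM2 : gauss M m'.+1.-1 = G m' a.+1 by rewrite -gaussE; congr gauss; lia.
have eN1 : gauss N l = G l b'.+1 by rewrite -gaussE; congr gauss; lia.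
have eN2 : gauss N l.+1 = G l.+1 b' by rewrite -gaussE; congr gauss; lia.
rewrite eM1 eM2 eN1 eN2.
apply: (@main (m' + a + l + b')) => //; lia.
Qed.
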